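(* Let $R$ be a prime right noetherian ring whose right Krull dimension is a finite integer $n$, let $m\le n$ be an integer, let $X=\{p\in \operatorname{Spec}R : |R/p| = m\}$, and let $V=\bigcap_{p\in X}C(p)$. Define $k=\{I : I\cap V\neq\emptyset\}$, $w=\{I : R/I \text{ is } V\text{-torsion}\}$, $g=\{I : |R/I|<m\}$ (families of right ideals of $R$). Then: (i) $w$ and $g$ are Gabriel filters; (ii) if $X$ has the right intersection condition, then $g\subseteq k$.
   Context: All modules are right modules; $|M|$ denotes the (right) Krull dimension of $M$. For an ideal $A$, $C(A)$ is the set of elements of $R$ regular modulo $A$. A right $R$-module $M$ is $V$-torsion if for every $x\in M$ there is $t\in V$ with $xt=0$. A family $F$ of right ideals is a Gabriel filter if: (a) $I\in F$ and $I\subseteq J$ (a right ideal) imply $J\in F$; (b) $I,J\in F$ imply $I\cap J\in F$; (c) $I\in F$ and $x\in R$ imply $x^{-1}(I)=\{a\in R: xa\in I\}\in F$. $X$ has the right intersection condition if for every right ideal $I$ with $I\cap C(p)\neq\emptyset$ for all $p\in X$, one has $I\cap V\neq\emptyset$. *)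

(* Defs.v *)
From HB Require Import structures.
From mathcomp Require Import all_boot all_algebra.
Set Implicit Arguments. Unset Strict Implicit. Unset Printing Implicit Defensive.
Import GRing.Theory.
Local Open Scope ring_scope.

Section KrullDefs.
Variable R : nzRingType.

Definition incl (A B : R -> Prop) : Prop := forall x, A x -> B x.
Definition fullset : R -> Prop := fun _ => True.
Definition zeroset : R -> Prop := fun x => x = 0.

Definition right_ideal (I : R -> Prop) : Prop :=
  [/\ I 0, (forall x y, I x -> I y -> I (x - y)) & (forall x r, I x -> I (x * r))].

Definition ideal (I : R -> Prop) : Prop :=
  right_ideal I /\ (forall x r, I x -> I (r * x)).

Definition prime_ideal (p : R -> Prop) : Prop :=
  [/\ ideal p, ~ p 1 & forall a b, (forall r, p (a * r * b)) -> p a \/ p b].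

Definition prime_ring : Prop := prime_ideal zeroset.

Definition right_noetherian : Prop :=
  forall I : nat -> R -> Prop,
    (forall i, right_ideal (I i)) -> (forall i, incl (I i) (I i.+1)) ->
    exists N, forall i, (N <= i)%N -> incl (I i) (I N).

(* Krull dimension (Gabriel-Rentschler deviation) of the right module B/A,
   where A ⊆ B are right ideals; submodules of B/A are the right ideals
   between A and B.
   kdim_lt j A B  <->  |B/A| < j, i.e. |B/A| <= j-1 (with |0| = -1):
   - |B/A| <= -1 iff B/A = 0;
   - |B/A| <= k (k >= 0) iff every descending chain of submodules has all but
     finitely many successive factors of dimension <= k-1. *)
Fixpoint kdim_lt (j : nat) (A B : R -> Prop) : Prop :=
  match j with
  | 0 => incl B A
  | j'.+1 =>
      forall x : nat -> R -> Prop,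
        (forall i, right_ideal (x i)) ->
        (forall i, incl A (x i) /\ incl (x i) B) ->
        (forall i, incl (x i.+1) (x i)) ->
        exists N, forall i, (N <= i)%N -> kdim_lt j' (x i.+1) (x i)
  end.

Definition kdim_eq (d : nat) (A B : R -> Prop) : Prop :=
  kdim_lt d.+1 A B /\ ~ kdim_lt d A B.

Definition regmod (A : R -> Prop) (c : R) : Prop :=
  forall x, (A (c * x) -> A x) /\ (A (x * c) -> A x).

Definition Xset (m : nat) (p : R -> Prop) : Prop :=
  prime_ideal p /\ kdim_eq m p fullset.

Definition Vof (X : (R -> Prop) -> Prop) (c : R) : Prop :=
  forall p, X p -> regmod p c.

Definition torsion_by (V : R -> Prop) (I : R -> Prop) : Prop :=
  forall x, exists t, V t /\ I (x * t).

Definition kfam (m : nat) (I : R -> Prop) : Prop :=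
  right_ideal I /\ exists v, I v /\ Vof (Xset m) v.
Definition wfam (m : nat) (I : R -> Prop) : Prop :=
  right_ideal I /\ torsion_by (Vof (Xset m)) I.
Definition gfam (m : nat) (I : R -> Prop) : Prop :=
  right_ideal I /\ kdim_lt m I fullset.

Definition gabriel_filter (F : (R -> Prop) -> Prop) : Prop :=
  [/\ (forall I J, F I -> right_ideal J -> incl I J -> F J),
      (forall I J, F I -> F J -> F (fun x => I x /\ J x)) &
      (forall I x, F I -> F (fun a => I (x * a)))].

Definition right_intersection_condition (X : (R -> Prop) -> Prop) : Prop :=
  forall I, right_ideal I ->
    (forall p, X p -> exists c, I c /\ regmod p c) ->
    exists v, I v /\ Vof X v.

End KrullDefs.

(* Main.v *)
Require Import Defs.
From mathcomp Require Import all_boot all_algebra.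
From Stdlib Require Import Classical ClassicalEpsilon.
Set Implicit Arguments. Unset Strict Implicit. Unset Printing Implicit Defensive.
Import GRing.Theory.
Local Open Scope ring_scope.

Section Krull.
Variable R : nzRingType.

Definition capI (X Y : R -> Prop) : R -> Prop := fun z => X z /\ Y z.
Definition sumI (X Y : R -> Prop) : R -> Prop :=
  fun z => exists a b, X a /\ Y b /\ z = a + b.

Lemma ri0 (I : R -> Prop) : right_ideal I -> I 0. Proof. by case. Qed.
Lemma riB (I : R -> Prop) x y : right_ideal I -> I x -> I y -> I (x - y).
Proof. by case=> _ H _; apply: H. Qed.
Lemma riM (I : R -> Prop) x r : right_ideal I -> I x -> I (x * r).
Proof. by case=> _ _ H; apply: H. Qed.
Lemma riN (I : R -> Prop) x : right_ideal I -> I x -> I (- x).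
Proof. move=> HI Hx; rewrite -sub0r; apply: riB => //; exact: ri0. Qed.
Lemma riD (I : R -> Prop) x y : right_ideal I -> I x -> I y -> I (x + y).
Proof. move=> HI Hx Hy; rewrite -[y]opprK; apply: riB => //; exact: riN. Qed.

Lemma ri_capI (X Y : R -> Prop) : right_ideal X -> right_ideal Y -> right_ideal (capI X Y).
Proof.
move=> HX HY; split.
- by split; apply: ri0.
- by move=> x y [? ?] [? ?]; split; apply: riB.
- by move=> x r [? ?]; split; apply: riM.
Qed.

Lemma ri_sumI (X Y : R -> Prop) : right_ideal X -> right_ideal Y -> right_ideal (sumI X Y).
Proof.
move=> HX HY; split.
- by exists 0, 0; rewrite addr0; split; [apply: ri0|split; [apply: ri0|]].
- move=> x y [a [b [Ha [Hb ->]]]] [a' [b' [Ha' [Hb' ->]]]].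
  exists (a - a'), (b - b'); split; first exact: riB.
  split; first exact: riB.
  by rewrite opprD addrACA.
- move=> x r [a [b [Ha [Hb ->]]]]; exists (a * r), (b * r).
  by split; [apply: riM|split; [apply: riM|rewrite mulrDl]].
Qed.

Lemma kdim_refl j (A B : R -> Prop) : incl B A -> kdim_lt j A B.
Proof.
elim: j A B => [|j IH] A B HBA //= x Hx Hxb Hdec.
exists 0%N => i _; apply: IH => z Hz.
have [H1 _] := Hxb i.+1; have [_ H2] := Hxb i.
by apply: H1; apply: HBA; apply: H2.
Qed.

Lemma kdim_emb j : forall (A B A' B' : R -> Prop) (phi : (R -> Prop) -> (R -> Prop)),
  right_ideal A -> right_ideal B -> incl A B ->
  (forall X, right_ideal X -> incl A X -> incl X B ->
     [/\ right_ideal (phi X), incl A' (phi X) & incl (phi X) B']) ->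
  (forall X Y, right_ideal X -> right_ideal Y -> incl A X -> incl X B ->
     incl A Y -> incl Y B -> incl X Y -> incl (phi X) (phi Y)) ->
  (forall X Y, right_ideal X -> right_ideal Y -> incl A X -> incl X B ->
     incl A Y -> incl Y B -> incl (phi X) (phi Y) -> incl X Y) ->
  kdim_lt j A' B' -> kdim_lt j A B.
Proof.
elim: j => [|j IH] A B A' B' phi HA HB HAB Hphi Hmon Href /=.
  move=> H; apply: (Href B A) => //.
  have [_ _ H2] := Hphi B HB HAB (fun z h => h).
  have [_ H3 _] := Hphi A HA (fun z h => h) HAB.
  by move=> z /H2 /H /H3.
move=> Hk x Hx Hxb Hdec.
have Hin i : [/\ right_ideal (phi (x i)), incl A' (phi (x i)) & incl (phi (x i)) B'].
  by have [? ?] := Hxb i; apply: Hphi.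
have [N HN] := Hk (fun i => phi (x i)) (fun i => let: And3 a _ _ := Hin i in a)
   (fun i => let: And3 _ b c := Hin i in conj b c)
   (fun i => Hmon _ _ (Hx _) (Hx _) (proj1 (Hxb _)) (proj2 (Hxb _))
                  (proj1 (Hxb _)) (proj2 (Hxb _)) (Hdec i)).
exists N => i /HN Hi.
have [Ha1 Hb1] := Hxb i.+1; have [Ha0 Hb0] := Hxb i.
apply: (IH _ _ _ _ phi (Hx i.+1) (Hx i) (Hdec i) _ _ _ Hi).
- move=> X HX H1 H2.
  have HAX : incl A X by move=> z h; apply: H1; apply: Ha1.
  have HXB : incl X B by move=> z h; apply: Hb0; apply: H2.
  have [? _ _] := Hphi X HX HAX HXB.
  split => //.
  + by apply: Hmon => //; move=> z h; apply: Hb0; apply: Hdec.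
  + by apply: Hmon.
- move=> X Y HX HY H1 H2 H3 H4; apply: Hmon => // z h;
    by [apply: H1; apply: Ha1|apply: Hb0; apply: H2|apply: H3; apply: Ha1|apply: Hb0; apply: H4].
- move=> X Y HX HY H1 H2 H3 H4; apply: Href => // z h;
    by [apply: H1; apply: Ha1|apply: Hb0; apply: H2|apply: H3; apply: Ha1|apply: Hb0; apply: H4].
Qed.


Lemma kdim_ext j : forall (A C B : R -> Prop),
  right_ideal A -> right_ideal C -> right_ideal B -> incl A C -> incl C B ->
  kdim_lt j A C -> kdim_lt j C B -> kdim_lt j A B.
Proof.
elim: j => [|j IH] A C B HA HC HB HAC HCB /=.
  by move=> H1 H2 z /H2 /H1.
move=> K1 K2 x Hx Hxb Hdec.
have [N1 HN1] := K1 (fun i => capI (x i) C) (fun i => ri_capI (Hx i) HC)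
  (fun i => conj (fun z h => conj (proj1 (Hxb i) z h) (HAC z h)) (fun z h => proj2 h))
  (fun i z h => conj (Hdec i z (proj1 h)) (proj2 h)).
have [N2 HN2] := K2 (fun i => sumI (x i) C) (fun i => ri_sumI (Hx i) HC)
  (fun i => conj (fun z h => ex_intro _ 0 (ex_intro _ z (conj (ri0 (Hx i))
                   (conj h (esym (add0r z))))))
                 (fun z '(ex_intro a (ex_intro b (conj Ha (conj Hb Hz)))) =>
                    eq_ind_r B (riD HB (proj2 (Hxb i) a Ha) (HCB b Hb)) Hz))
  (fun i z '(ex_intro a (ex_intro b (conj Ha (conj Hb Hz)))) =>
     ex_intro _ a (ex_intro _ b (conj (Hdec i a Ha) (conj Hb Hz)))).
exists (maxn N1 N2) => i; rewrite geq_max => /andP [/HN1 H1 /HN2 H2].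
set D := sumI (x i.+1) (capI (x i) C).
have HD : right_ideal D by apply: ri_sumI => //; apply: ri_capI.
have H1D : incl (x i.+1) D.
  by move=> z h; exists z, 0; split => //; split; [split; apply: ri0|rewrite addr0].
have HDi : incl D (x i).
  move=> z [a [b [Ha [[Hb _] ->]]]]; apply: riD => //; exact: Hdec.
apply: (IH (x i.+1) D (x i)) => //.
- apply: (kdim_emb (phi := fun X => capI X C) (Hx i.+1) HD H1D _ _ _ H1).
  + move=> X HX HaX HXb; split; first exact: ri_capI.
    * by move=> z [h1 h2]; split => //; apply: HaX.
    * by move=> z [h1 h2]; split => //; apply: HDi; apply: HXb.
  + by move=> X Y _ _ _ _ _ _ HXY z [h1 h2]; split => //; apply: HXY.
  + move=> X Y HX HY HaX HXb HaY HYb Hc z Hz.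
    have [a [b [Ha [[Hb HbC] Hze]]]] := HXb z Hz.
    have HbX : X b.
      have -> : b = z - a by rewrite Hze addrC addKr.
      by apply: riB => //; apply: HaX.
    have [HbY _] := Hc b (conj HbX HbC).
    by rewrite Hze; apply: riD => //; apply: HaY.
- apply: (kdim_emb (phi := fun X => sumI X C) HD (Hx i) HDi _ _ _ H2).
  + move=> X HX HaX HXb; split; first exact: ri_sumI.
    * move=> z [a [b [Ha [Hb ->]]]]; exists a, b; split => //; apply: HaX; exact: H1D.
    * by move=> z [a [b [Ha [Hb ->]]]]; exists a, b; split => //; apply: HXb.
  + by move=> X Y _ _ _ _ _ _ HXY z [a [b [Ha [Hb ->]]]]; exists a, b; split => //; apply: HXY.
  + move=> X Y HX HY HaX HXb HaY HYb Hc z Hz.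
    have [a [b [Ha [Hb Hze]]]] := Hc z (ex_intro _ z (ex_intro _ 0
          (conj Hz (conj (ri0 HC) (esym (addr0 z)))))).
    have Hbi : capI (x i) C b.
      split => //; have -> : b = z - a by rewrite Hze addrC addKr.
      by apply: riB => //; [apply: HXb|apply: HYb].
    have HbY : Y b by apply: HaY; exists 0, b; split; [apply: ri0| split; [|rewrite add0r]].
    by rewrite Hze; apply: riD.
Qed.

Lemma ri_full : right_ideal (@fullset R).
Proof. by []. Qed.

Lemma kdim_quot j (A A' B : R -> Prop) : right_ideal A -> right_ideal A' -> right_ideal B ->
  incl A A' -> incl A' B -> kdim_lt j A B -> kdim_lt j A' B.
Proof.
move=> HA HA' HB H1 H2; apply: (kdim_emb (phi := id)) => //.
by move=> X HX h1 h2; split => // z h; apply: h1; apply: H1.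
Qed.

Lemma kdim_sub j (A C B : R -> Prop) : right_ideal A -> right_ideal C -> right_ideal B ->
  incl A C -> incl C B -> kdim_lt j A B -> kdim_lt j A C.
Proof.
move=> HA HC HB H1 H2; apply: (kdim_emb (phi := id)) => //.
by move=> X HX h1 h2; split => // z h; apply: H2; apply: h2.
Qed.

Lemma kdim_cap j (I J : R -> Prop) : right_ideal I -> right_ideal J ->
  kdim_lt j I (@fullset R) -> kdim_lt j J (@fullset R) -> kdim_lt j (capI I J) (@fullset R).
Proof.
move=> HI HJ KI KJ.
apply: (kdim_ext (C := I)) => //; first exact: ri_capI.
- by move=> z [].
- apply: (kdim_emb (phi := fun X => sumI X J) (ri_capI HI HJ) HI (fun z h => proj1 h) _ _ _ KJ).
  + move=> X HX _ _; split => //; first exact: ri_sumI.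
    by move=> z h; exists 0, z; split; [apply: ri0|split; [|rewrite add0r]].
  + by move=> X Y _ _ _ _ _ _ HXY z [a [b [Ha [Hb ->]]]]; exists a, b; split => //; apply: HXY.
  + move=> X Y HX HY HaX HXb HaY HYb Hc z Hz.
    have [a [b [Ha [Hb Hze]]]] := Hc z (ex_intro _ z (ex_intro _ 0
          (conj Hz (conj (ri0 HJ) (esym (addr0 z)))))).
    have HbY : Y b.
      apply: HaY; split => //; have -> : b = z - a by rewrite Hze addrC addKr.
      by apply: riB => //; [apply: HXb|apply: HYb].
    by rewrite Hze; apply: riD.
Qed.

Definition imgI (x : R) (X I : R -> Prop) : R -> Prop :=
  fun z => exists a q, X a /\ I q /\ z = x * a + q.

Lemma ri_imgI x (X I : R -> Prop) : right_ideal X -> right_ideal I -> right_ideal (imgI x X I).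
Proof.
move=> HX HI; split.
- by exists 0, 0; rewrite mulr0 addr0; split; [apply: ri0|split; [apply: ri0|]].
- move=> u v [a [q [Ha [Hq ->]]]] [a' [q' [Ha' [Hq' ->]]]].
  exists (a - a'), (q - q'); split; first exact: riB.
  by split; [apply: riB|rewrite mulrBr opprD addrACA].
- move=> u r [a [q [Ha [Hq ->]]]]; exists (a * r), (q * r).
  by split; [apply: riM|split; [apply: riM|rewrite mulrDl mulrA]].
Qed.

Lemma kdim_pre j (I B' : R -> Prop) x : right_ideal I -> right_ideal B' ->
  incl I B' -> (forall a, B' (x * a)) ->
  kdim_lt j I B' -> kdim_lt j (fun a => I (x * a)) (@fullset R).
Proof.
move=> HI HB' HIB HxB K.
have Hpre : right_ideal (fun a => I (x * a)).
  split; first by rewrite mulr0; apply: ri0.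
  - by move=> a b h1 h2; rewrite mulrBr; apply: riB.
  - by move=> a r h; rewrite mulrA; apply: riM.
apply: (kdim_emb (phi := fun X => imgI x X I) Hpre ri_full (fun _ _ => Logic.I) _ _ _ K).
- move=> X HX _ _; split; first exact: ri_imgI.
  + by move=> z h; exists 0, z; rewrite mulr0 add0r; split => //; apply: ri0.
  + by move=> z [a [q [_ [Hq ->]]]]; apply: riD => //; apply: HIB.
- by move=> X Y _ _ _ _ _ _ HXY z [a [q [Ha [Hq ->]]]]; exists a, q; split => //; apply: HXY.
- move=> X Y HX HY HaX _ HaY _ Hc a Ha.
  have [b [q [Hb [Hq Hze]]]] := Hc (x * a) (ex_intro _ a (ex_intro _ 0
         (conj Ha (conj (ri0 HI) (esym (addr0 _)))))).
  have -> : a = (a - b) + b by rewrite subrK.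
  apply: riD => //; apply: HaY.
  by rewrite mulrBr Hze addrC addKr.
Qed.

End Krull.


Section Goldie.
Variable R : nzRingType.
Variable p : R -> Prop.
Hypothesis Hp : prime_ideal p.
Hypothesis Hnoeth : right_noetherian R.

Lemma pR : right_ideal p. Proof. by case: Hp => [[]]. Qed.
Lemma pL x r : p x -> p (r * x). Proof. by case: Hp => [[_ H]] _ _; apply: H. Qed.
Lemma p0 : p 0. Proof. exact: ri0 pR. Qed.
Lemma pB x y : p x -> p y -> p (x - y). Proof. exact: riB pR. Qed.
Lemma pD x y : p x -> p y -> p (x + y). Proof. exact: riD pR. Qed.
Lemma pN x : p x -> p (- x). Proof. exact: riN pR. Qed.
Lemma pM x r : p x -> p (x * r). Proof. exact: riM pR. Qed.
Lemma pprime a b : (forall r, p (a * r * b)) -> p a \/ p b.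
Proof. by case: Hp => _ _ H; apply: H. Qed.
Lemma p_eq x y : p (x - y) -> p y -> p x.
Proof. by move=> h1 h2; rewrite -(subrK y x); apply: pD. Qed.

Lemma zmod_swap (a b c d : R) : a - b - (c - d) = (a - c) - (b - d).
Proof. by rewrite !opprB addrACA [RHS]addrACA [- c + _]addrC. Qed.

Definition rann (x : R) : R -> Prop := fun s => p (x * s).
Lemma ri_rann x : right_ideal (rann x).
Proof.
split; first by rewrite /rann mulr0; apply: p0.
- by move=> a b h1 h2; rewrite /rann mulrBr; apply: pB.
- by move=> a r h; rewrite /rann mulrA; apply: pM.
Qed.

Definition ess (E : R -> Prop) : Prop :=
  forall K, right_ideal K -> incl p K -> (forall z, K z -> E z -> p z) ->
    forall z, K z -> p z.

Lemma max_elem (Q : R -> Prop) (f : R -> R -> Prop) :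
  (forall a, right_ideal (f a)) -> (exists a, Q a) ->
  exists a, Q a /\ forall b, Q b -> incl (f a) (f b) -> incl (f b) (f a).
Proof.
move=> Hf [a0 Ha0]; apply: NNPP => Hno.
have H : forall a, Q a -> exists b, Q b /\ incl (f a) (f b) /\ ~ incl (f b) (f a).
  move=> a Qa; apply: NNPP => Hb; apply: Hno; exists a; split => // b Qb Hab.
  apply: NNPP => Hba; apply: Hb; by exists b.
pose P a b := Q b /\ incl (f a) (f b) /\ ~ incl (f b) (f a).
pose step a := epsilon (inhabits a0) (P a).
pose sq i := iter i step a0.
have Qs : forall i, Q (sq i).
  elim=> [|i IH] //=.
  by have [? _] := epsilon_spec (inhabits a0) (P (sq i)) (H _ IH).
have Ps i : P (sq i) (sq i.+1) by exact: (epsilon_spec (inhabits a0) (P (sq i)) (H _ (Qs i))).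
have [N HN] := @Hnoeth (fun i => f (sq i)) (fun i => Hf (sq i)) (fun i => proj1 (proj2 (Ps i))).
by have [_ [_ []]] := Ps N; apply: HN.
Qed.

Lemma stab a : exists N, forall i, (N <= i)%N -> incl (rann (a ^+ i)) (rann (a ^+ N)).
Proof.
have H1 : forall i, incl (rann (a ^+ i)) (rann (a ^+ i.+1)).
  by move=> i s; rewrite /rann exprS -mulrA; apply: pL.
have [N HN] := @Hnoeth (fun i => rann (a ^+ i)) (fun i => ri_rann _) H1.
by exists N.
Qed.

Lemma comm_pow (a x : R) n : a * (x * a) ^+ n = (a * x) ^+ n * a.
Proof.
elim: n => [|n IH]; first by rewrite !expr0 mul1r mulr1.
by rewrite exprSr mulrA IH exprSr -!mulrA.
Qed.

Lemma first_change (P : nat -> Prop) N : ~ P 0%N -> P N -> exists k, ~ P k /\ P k.+1.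
Proof.
elim: N => [|N IH] h0 hN; first by [].
by case: (classic (P N)) => h; [apply: IH|exists N].
Qed.

Lemma nil_lemma (L : R -> Prop) : right_ideal L ->
  (forall a, L a -> exists k, p (a ^+ k)) -> forall a, L a -> p a.
Proof.
move=> HL Hnil a0 La0; apply: NNPP => npa0.
have [a [[La npa] Hmax]] := max_elem (Q := fun a => L a /\ ~ p a) ri_rann (ex_intro _ a0 (conj La0 npa0)).
have Haxa : forall x, p (a * x * a).
  move=> x; have [N HN] := Hnil (a * x) (riM x HL La).
  have h0 : ~ p (a * (x * a) ^+ 0) by rewrite expr0 mulr1.
  have hN : p (a * (x * a) ^+ N) by rewrite comm_pow; apply: pM.
  have [k [nk pk]] := first_change (P := fun k => p (a * (x * a) ^+ k)) h0 hN.
  have Lb : L (a * (x * a) ^+ k) by apply: riM.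
  have Hinc : incl (rann a) (rann (a * (x * a) ^+ k)).
    by move=> s; rewrite /rann comm_pow -mulrA; apply: pL.
  have H2 := Hmax _ (conj Lb nk) Hinc (x * a).
  have H3 : rann (a * (x * a) ^+ k) (x * a) by rewrite /rann -mulrA -exprSr.
  by move: (H2 H3); rewrite /rann mulrA.
by case: (pprime Haxa).
Qed.

Lemma good_elem (L : R -> Prop) : right_ideal L -> (exists a, L a /\ ~ p a) ->
  exists y, [/\ L y, ~ p y & forall s, p (y * (y * s)) -> p (y * s)].
Proof.
move=> HL [a0 [La0 na0]].
have [a [La Hna]] : exists a, L a /\ forall k, ~ p (a ^+ k).
  apply: NNPP => H; apply: na0; apply: (nil_lemma HL) => // a La.
  apply: NNPP => Hk; apply: H; exists a; split => // k pk; apply: Hk; by exists k.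
have [N HN] := stab a.
exists (a ^+ N.+1); split.
- by rewrite exprS; apply: riM.
- exact: Hna.
- move=> s; rewrite mulrA -exprD => h.
  have hle : (N <= N.+1 + N.+1)%N by apply: (leq_trans (leqnSn N)); rewrite leq_addr.
  have := HN _ hle s h.
  by rewrite /rann exprS -mulrA; apply: pL.
Qed.

Lemma p_sub_rann x : incl p (rann x).
Proof. by move=> s h; apply: pL. Qed.

Lemma ess_mono (E E' : R -> Prop) : ess E -> incl E E' -> ess E'.
Proof.
move=> HE HEE K HK pK HKE; apply: HE => // z Kz Ez; apply: HKE => //; exact: HEE.
Qed.

Lemma ess_pre (E : R -> Prop) r : right_ideal E -> incl p E -> ess E ->
  ess (fun a => E (r * a)).
Proof.
move=> HE pE Hess K HK pK HKE.
have HK' : forall z, imgI r K p z -> p z.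
  apply: Hess; first exact: ri_imgI pR.
  - by move=> z h; exists 0, z; rewrite mulr0 add0r; split => //; apply: ri0.
  - move=> z [a [q [Ka [pq ->]]]] Ez.
    have Era : E (r * a) by rewrite -(addrK q (r * a)); apply: riB => //; apply: pE.
    by apply: pD => //; apply: pL; apply: HKE.
move=> z Kz; apply: HKE => //; apply: pE; apply: HK'.
by exists z, 0; split => //; split; [apply: p0|rewrite addr0].
Qed.

Lemma stab_good a : exists N, forall s,
  p (a ^+ N.+1 * (a ^+ N.+1 * s)) -> p (a ^+ N.+1 * s).
Proof.
have [N HN] := stab a; exists N.
move=> s; rewrite mulrA -exprD => h.
have hle : (N <= N.+1 + N.+1)%N by apply: (leq_trans (leqnSn N)); rewrite leq_addr.
have := HN _ hle s h.
by rewrite /rann exprS -mulrA; apply: pL.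
Qed.

Lemma nilp_of_ess z : ess (rann z) -> exists k, p (z ^+ k).
Proof.
move=> Hz; have [N HN] := stab_good z; exists N.+1.
set y := z ^+ N.+1 in HN *.
have Hy : ess (rann y).
  apply: (ess_mono Hz) => s; rewrite /rann /y exprSr -mulrA; apply: pL.
have := Hy (imgI y (@fullset R) p) (ri_imgI y (ri_full R) pR) _ _ y.
apply.
- by move=> q h; exists 0, q; rewrite mulr0 add0r.
- move=> w [a [q [_ [pq ->]]]] h; apply: pD => //; apply: HN.
  move: h; rewrite /rann mulrDr => h.
  by rewrite -(addrK (y * q) (y * (y * a))); apply: pB => //; apply: pL.
- by exists 1, 0; rewrite mulr1 addr0; split => //; split => //; apply: p0.
Qed.

Lemma Z_lemma x : ess (rann x) -> p x.
Proof.
move=> Hx.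
pose L := fun z => exists s, p (z - x * s).
have HL : right_ideal L.
  split; first by exists 0; rewrite mulr0 subr0; apply: p0.
  - move=> a b [s hs] [t ht]; exists (s - t).
    by rewrite mulrBr zmod_swap; apply: pB.
  - by move=> a r [s hs]; exists (s * r); rewrite mulrA -mulrBl; apply: pM.
apply: (nil_lemma HL); last by exists 1; rewrite mulr1 subrr; apply: p0.
move=> z [s hs]; apply: nilp_of_ess.
have H1 : ess (fun a => rann x (s * a)) by apply: ess_pre => //; [apply: ri_rann|apply: p_sub_rann].
apply: (ess_mono H1) => a; rewrite /rann mulrA => h.
rewrite -(subrK (x * s) z) mulrDl; apply: pD => //; exact: pM.
Qed.

Lemma addsub4 (a b c d : R) : (a + b) - (c + d) = (a - c) + (b - d).
Proof. by rewrite opprD addrACA. Qed.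

Fixpoint Wch (K : R -> Prop) (c : R) (k : nat) : R -> Prop :=
  match k with
  | 0 => K
  | k.+1 => fun z => exists t w, K t /\ Wch K c k w /\ z = t + c * w
  end.

Lemma lemmaB c : incl (rann c) p -> ess (imgI c (@fullset R) p).
Proof.
move=> Hc K HK pK HKE.
have riW : forall k, right_ideal (Wch K c k).
  elim=> [|k IH] //=; split.
  - by exists 0, 0; rewrite mulr0 addr0; split; [apply: ri0|split; [apply: ri0|]].
  - move=> a b [t [w [Kt [Ww ->]]]] [t' [w' [Kt' [Ww' ->]]]].
    exists (t - t'), (w - w'); split; first exact: riB.
    by split; [apply: riB|rewrite addsub4 mulrBr].
  - move=> a r [t [w [Kt [Ww ->]]]]; exists (t * r), (w * r).
    by split; [apply: riM|split; [apply: riM|rewrite mulrDl mulrA]].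
have KW : forall k, incl K (Wch K c k).
  elim=> [|k IH] //= z Kz; exists z, 0; rewrite mulr0 addr0.
  by split => //; split => //; apply: ri0.
have Wup : forall k, incl (Wch K c k) (Wch K c k.+1).
  elim=> [|k IH] z.
    by move=> Kz; exists z, 0; rewrite mulr0 addr0; split => //; split => //; apply: ri0.
  move=> [t [w [Kt [Ww ->]]]]; exists t, w; split => //; split => //; exact: IH.
have key : forall k t, Wch K c k (c ^+ k.+1 * t) -> p t.
  elim=> [|k IH] t /=.
    rewrite expr1 => h; apply: Hc; apply: HKE => //; exists t, 0; rewrite addr0; by split => //; split => //; apply: p0.
  move=> [t0 [w [Kt0 [Ww He]]]].
  have Et0 : t0 = c * (c ^+ k.+1 * t - w).
    by rewrite mulrBr mulrA -exprS He addrK.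
  have pt0 : p t0 by apply: HKE => //; rewrite Et0; exists (c ^+ k.+1 * t - w), 0; rewrite addr0; split => //; split => //; apply: p0.
  apply: IH; rewrite -(subrK w (c ^+ k.+1 * t)); apply: riD => //.
  apply: KW; apply: pK; apply: Hc; rewrite /rann -Et0 //.
have [N HN] := @Hnoeth (Wch K c) riW Wup.
move=> z Kz; apply: (key N); apply: (HN N.+1 (leqnSn N)).
elim: N.+1 {HN} => [|k IH] /=; first by rewrite expr0 mul1r.
exists 0, (c ^+ k * z); rewrite add0r exprS mulrA; split; first exact: ri0.
by split.
Qed.

Lemma left_reg c : incl (rann c) p -> forall x, p (x * c) -> p x.
Proof.
move=> Hc x hx; apply: Z_lemma; apply: (ess_mono (lemmaB Hc)).
move=> z [s [q [_ [pq ->]]]]; by rewrite /rann mulrDr mulrA; apply: pD; [apply: pM|apply: pL].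
Qed.

Record gst := GSt { gA : R -> Prop; gU : R -> Prop; gc : R }.

Record ginv (E : R -> Prop) (st : gst) : Prop := GInv {
  gi1 : right_ideal (gA st); gi2 : incl p (gA st); gi3 : right_ideal (gU st);
  gi4 : incl p (gU st); gi5 : E (gc st);
  gi6 : forall s z, gA st z -> p (gc st * s + z) -> gA st s /\ p z;
  gi7 : forall u z, gU st u -> gA st z -> p (u + z) -> p z }.

Definition ggood (E : R -> Prop) (st : gst) (x : R) : Prop :=
  [/\ E x, gA st x, ~ p x & forall s, p (x * (x * s)) -> p (x * s)].

Definition gnext (st : gst) (x : R) : gst :=
  GSt (capI (gA st) (rann x)) (fun z => exists u s, gU st u /\ z = u + x * s) (gc st + x).

Lemma ginv_next E st x : right_ideal E -> ginv E st -> ggood E st x -> ginv E (gnext st x).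
Proof.
move=> HE [HA pA HU pU Ec Ic IU] [Ex Ax npx Gx]; split => /=.
- exact: ri_capI (ri_rann x).
- by move=> z h; split; [apply: pA|apply: p_sub_rann].
- split.
  + by exists 0, 0; rewrite mulr0 addr0; split => //; apply: ri0.
  + move=> a b [u [s [Uu ->]]] [u' [s' [Uu' ->]]]; exists (u - u'), (s - s').
    by rewrite addsub4 mulrBr; split => //; apply: riB.
  + move=> a r [u [s [Uu ->]]]; exists (u * r), (s * r).
    by rewrite mulrDl mulrA; split => //; apply: riM.
- by move=> z h; exists z, 0; rewrite mulr0 addr0; split => //; apply: pU.
- exact: riD.
- move=> s z [Az xz]; rewrite mulrDl -addrA => h.
  have Axsz : gA st (x * s + z) by apply: riD => //; apply: riM.
  have [As pxsz] := Ic _ _ Axsz h.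
  have pxs : p (x * s).
    apply: Gx; rewrite -(addrK (x * z) (x * (x * s))) -mulrDr; apply: pB => //; exact: pL.
  split; first by split.
  by rewrite -(addKr (x * s) z); apply: pD => //; apply: pN.
- move=> u' z [u [s [Uu ->]]] [Az xz]; rewrite -addrA => h.
  have Axsz : gA st (x * s + z) by apply: riD => //; apply: riM.
  have pxsz := IU _ _ Uu Axsz h.
  have pxs : p (x * s).
    apply: Gx; rewrite -(addrK (x * z) (x * (x * s))) -mulrDr; apply: pB => //; exact: pL.
  by rewrite -(addKr (x * s) z); apply: pD => //; apply: pN.
Qed.

Lemma goldie (E : R -> Prop) : right_ideal E -> incl p E -> ess E ->
  exists c, E c /\ incl (rann c) p.
Proof.
move=> HE pE Hess; apply: NNPP => Hno.
have Hex : forall st, ginv E st -> exists x, ggood E st x.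
  move=> st Hst; have [HA pA HU pU Ec Ic IU] := Hst.
  apply: NNPP => Hnx.
  have HL : right_ideal (capI E (gA st)) by apply: ri_capI.
  case: (classic (exists a, capI E (gA st) a /\ ~ p a)) => [Ha|Hna].
    have [y [[Ey Ay] npy Gy]] := good_elem HL Ha.
    by apply: Hnx; exists y; split.
  have Asub : forall z, gA st z -> p z.
    apply: Hess => // z Az Ez; apply: NNPP => npz; apply: Hna; exists z; by split.
  apply: Hno; exists (gc st); split => // s h.
  apply: Asub; apply: (proj1 (Ic s 0 (ri0 HA) _)); by rewrite addr0.
pose st0 := GSt (@fullset R) p 0.
have Hst0 : ginv E st0.
  split => //=; first exact: pR.
  - exact: ri0.
  - by move=> s z _; rewrite mul0r add0r.
  - move=> u z pu _ h; by rewrite -(addKr u z); apply: pD => //; apply: pN.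
pose step st := gnext st (epsilon (inhabits 0) (ggood E st)).
pose sq i := iter i step st0.
have Inv : forall i, ginv E (sq i).
  elim=> [|i IH] //=; apply: ginv_next => //.
  exact: epsilon_spec (inhabits 0) (ggood E (sq i)) (Hex _ IH).
have Good i : ggood E (sq i) (epsilon (inhabits 0) (ggood E (sq i))).
  exact: epsilon_spec (inhabits 0) (ggood E (sq i)) (Hex _ (Inv i)).
have Hup : forall i, incl (gU (sq i)) (gU (sq i.+1)).
  by move=> i z h; exists z, 0; rewrite mulr0 addr0; split.
have [N HN] := @Hnoeth (fun i => gU (sq i)) (fun i => gi3 (Inv i)) Hup.
set x := epsilon (inhabits 0) (ggood E (sq N)).
have [Ex Ax npx _] := Good N.
have [_ _ HU _ _ _ IU] := Inv N.
have Ux : gU (sq N) x.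
  apply: (HN N.+1 (leqnSn N)); exists 0, 1; rewrite add0r mulr1; split => //; exact: ri0.
apply: npx; apply: (IU (- x) x) => //; first exact: riN.
by rewrite addNr; apply: p0.
Qed.

Definition Bl (l : seq R) : R -> Prop := fun s => forall k, k \in l -> p (k * s).

Lemma ri_Bl l : right_ideal (Bl l).
Proof.
split.
- by move=> k _; rewrite mulr0; apply: p0.
- by move=> a b h1 h2 k kl; rewrite mulrBr; apply: pB; [apply: h1|apply: h2].
- by move=> a r h k kl; rewrite mulrA; apply: pM; apply: h.
Qed.

Lemma ess_sum m (J : R -> Prop) : right_ideal J -> kdim_lt m J (@fullset R) ->
  ~ kdim_lt m p (@fullset R) -> ess (sumI J p).
Proof.
move=> HJ KJ Kp K HK pK HKE; apply: NNPP => Hno.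
have [k0 [Kk0 npk0]] : exists k0, K k0 /\ ~ p k0.
  apply: NNPP => H; apply: Hno => z Kz; apply: NNPP => npz; apply: H; by exists z.
have KpK : kdim_lt m p K.
  apply: (kdim_emb (phi := fun X => sumI X J) pR HK pK _ _ _ KJ).
  - move=> X HX _ _; split; [exact: ri_sumI| |by []].
    by move=> z h; exists 0, z; rewrite add0r; split; [apply: ri0|split].
  - by move=> X Y _ _ _ _ _ _ HXY z [a [b [Ha [Hb ->]]]]; exists a, b; split => //; apply: HXY.
  - move=> X Y HX HY HaX HXb HaY HYb Hc z Hz.
    have [a [b [Ha [Hb Hze]]]] := Hc z (ex_intro _ z (ex_intro _ 0
          (conj Hz (conj (ri0 HJ) (esym (addr0 z)))))).
    have Eb : b = z - a by rewrite Hze addrC addKr.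
    have pb : p b.
      apply: HKE; first by rewrite Eb; apply: riB => //; [apply: HXb|apply: HYb].
      by exists b, 0; rewrite addr0; split => //; split => //; apply: p0.
    by rewrite Hze; apply: riD => //; apply: HaY.
pose T := fun z => exists l : seq R, (forall k, k \in l -> K k) /\ forall s, Bl l s -> p (z * s).
have HT : right_ideal T.
  split.
  - by exists [::]; split => // s _; rewrite mul0r; apply: p0.
  - move=> a b [l [Kl Hl]] [l' [Kl' Hl']]; exists (l ++ l'); split.
      by move=> k; rewrite mem_cat => /orP [/Kl|/Kl'].
    move=> s Hs; rewrite mulrBl; apply: pB; [apply: Hl|apply: Hl'] => k kl; apply: Hs;
      by rewrite mem_cat kl ?orbT.
  - move=> a r [l [Kl Hl]]; exists (map (fun k => k * r) l); split.
      by move=> k /mapP [k' /Kl Kk' ->]; apply: riM.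
    move=> s Hs; rewrite -mulrA; apply: Hl => k kl; rewrite mulrA; apply: Hs.
    by apply/mapP; exists k.
have pT : incl p T by move=> z pz; exists [::]; split => // s _; apply: pM.
have LT : forall y z, T z -> T (y * z).
  by move=> y z [l [Kl Hl]]; exists l; split => // s /Hl h; rewrite -mulrA; apply: pL.
have KT : forall k, K k -> T k.
  move=> k Kk; exists [:: k]; split; first by move=> k'; rewrite inE => /eqP ->.
  by move=> s Hs; apply: Hs; rewrite inE.
have essT : ess T.
  move=> K' HK' pK' HK'T z K'z.
  have H : forall r, p (z * r * k0).
    move=> r; apply: HK'T; first by apply: (riM k0 HK'); apply: (riM r HK').
    by apply: LT; apply: KT.
  by case: (pprime H).
have [c [[l [Kl Hl]] Hc]] := goldie HT pT essT.
have KBl : forall l, (forall k, k \in l -> K k) -> kdim_lt m (Bl l) (@fullset R).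
  elim=> [|k l' IH] Kl'.
    by apply: kdim_refl => s _ k; rewrite in_nil.
  have Kk : K k by apply: Kl'; rewrite inE eqxx.
  have Kl2 : forall k', k' \in l' -> K k' by move=> k' h; apply: Kl'; rewrite inE h orbT.
  have H1 : kdim_lt m (fun a => p (k * a)) (@fullset R).
    by apply: (kdim_pre pR HK pK) => // a; apply: riM.
  have H2 := kdim_cap (ri_rann k) (ri_Bl l') H1 (IH Kl2).
  apply: (kdim_quot (ri_capI (ri_rann k) (ri_Bl l')) (ri_Bl _) (ri_full R) _ _ H2) => //.
  by move=> s [h1 h2] k'; rewrite inE => /orP [/eqP ->|/h2].
apply: Kp; apply: (kdim_quot (ri_Bl l) pR (ri_full R) _ _ (KBl l Kl)) => //.
by move=> s h; apply: Hc; apply: Hl.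
Qed.

Lemma reg_in m (J : R -> Prop) : right_ideal J -> kdim_lt m J (@fullset R) ->
  ~ kdim_lt m p (@fullset R) -> exists c, J c /\ regmod p c.
Proof.
move=> HJ KJ Kp.
have HE : right_ideal (sumI J p) by apply: ri_sumI => //; apply: pR.
have pE : incl p (sumI J p) by move=> z h; exists 0, z; rewrite add0r; split; [apply: ri0|split].
have [c [[j [q [Jj [pq ->]]]] Hc]] := goldie HE pE (ess_sum HJ KJ Kp).
exists j; split => // x; split => h.
- apply: Hc; rewrite /rann mulrDl; apply: pD => //; exact: pM.
- apply: (left_reg Hc); rewrite mulrDr; apply: pD => //; exact: pL.
Qed.

End Goldie.

Unset Implicit Arguments.

Lemma Vof_mul (R : nzRingType) (X : (R -> Prop) -> Prop) t s :
  Vof X t -> Vof X s -> Vof X (t * s).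
Proof.
move=> Ht Hs q Xq x; split.
- by rewrite -mulrA => /(proj1 (Ht q Xq (s * x))) /(proj1 (Hs q Xq x)).
- rewrite mulrA => h; have := proj2 (Hs q Xq (x * t)) h.
  exact: (proj2 (Ht q Xq x)).
Qed.

Theorem mainTheorem6 (R : nzRingType) (n m : nat) :
  @prime_ring R -> @right_noetherian R ->
  kdim_eq n (@zeroset R) (@fullset R) -> (m <= n)%N ->
  gabriel_filter (@wfam R m) /\ gabriel_filter (@gfam R m) /\
  (right_intersection_condition (@Xset R m) ->
     forall I, @gfam R m I -> @kfam R m I).
Proof.
move=> _ Hnoeth _ _; split; [|split].
- split.
  + move=> I J [HI HtI] HJ HIJ; split => // x.
    by have [t [Vt It]] := HtI x; exists t; split => //; apply: HIJ.
  + move=> I J [HI HtI] [HJ HtJ]; split; first exact: ri_capI.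
    move=> x; have [t [Vt It]] := HtI x; have [s [Vs Js]] := HtJ (x * t).
    exists (t * s); split; first exact: Vof_mul.
    by split; rewrite mulrA //; apply: riM.
  + move=> I x [HI HtI]; split.
    * split; first by rewrite mulr0; apply: ri0.
      - by move=> a b h1 h2; rewrite mulrBr; apply: riB.
      - by move=> a r h; rewrite mulrA; apply: riM.
    * by move=> a; have [t [Vt It]] := HtI (x * a); exists t; rewrite mulrA.
- split.
  + move=> I J [HI KI] HJ HIJ; split => //.
    exact: (kdim_quot HI HJ (ri_full R) HIJ (fun _ _ => Logic.I) KI).
  + move=> I J [HI KI] [HJ KJ]; split; first exact: ri_capI.
    exact: kdim_cap.
  + move=> I x [HI KI]; split.
    * split; first by rewrite mulr0; apply: ri0.
      - by move=> a b h1 h2; rewrite mulrBr; apply: riB.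
      - by move=> a r h; rewrite mulrA; apply: riM.
    * exact: (kdim_pre (B' := @fullset R) HI (ri_full R)).
- move=> HIC I [HI KI]; split => //; apply: HIC => // q [Hq [_ Kq]].
  exact: (reg_in Hq Hnoeth HI KI Kq).
Qed.
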